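(* Let $\mathcal M$ be a non-empty compact, locally connected Hausdorff space, $\vec\varphi:\mathcal M\to\mathbb R^k$ continuous, and $\vec y=(y_1,\dots,y_k)\in\mathbb R^k$. If $P,Q\in\mathcal M$ are $\langle\vec\varphi\preceq(y_1+\varepsilon,\dots,y_k+\varepsilon)\rangle$-connected for every $\varepsilon>0$, then $P$ and $Q$ are $\langle\vec\varphi\preceq\vec y\rangle$-connected.
   Context: For $\vec t\in\mathbb R^k$, $\mathcal M\langle\vec\varphi\preceq\vec t\rangle=\{P\in\mathcal M:\varphi_i(P)\le t_i,\ i=1,\dots,k\}$. Two points $P,Q\in\mathcal M$ are $\langle\vec\varphi\preceq\vec t\rangle$-connected if some connected subset of $\mathcal M\langle\vec\varphi\preceq\vec t\rangle$ contains both $P$ and $Q$. *)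

(* Defs.v *)
From mathcomp Require Import all_boot all_algebra all_classical all_reals all_analysis.
Import numFieldNormedType.Exports.

Set Implicit Arguments.
Unset Strict Implicit.
Unset Printing Implicit Defensive.

Local Open Scope classical_set_scope.
Local Open Scope ring_scope.

Definition locally_connected_space (T : topologicalType) : Prop :=
  forall (x : T) (U : set T), nbhs x U ->
    exists V : set T, [/\ open V, V x, connected V & V `<=` U].

Definition sublevel (T : Type) (R : realType) (k : nat)
    (phi : T -> 'rV[R]_k) (t : 'rV[R]_k) : set T :=
  [set P | forall i : 'I_k, phi P ord0 i <= t ord0 i].

Definition sublevel_connected (T : topologicalType) (R : realType) (k : nat)
    (phi : T -> 'rV[R]_k) (t : 'rV[R]_k) (P Q : T) : Prop :=
  exists C : set T, [/\ connected C, C `<=` sublevel phi t, C P & C Q].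

(* Main.v *)
Require Import Defs.
From mathcomp Require Import all_boot all_algebra all_classical all_reals all_analysis.
Import numFieldNormedType.Exports.
From mathcomp Require Import lra.
Import order.Order.TTheory GRing.Theory Num.Theory.
Local Open Scope classical_set_scope.
Local Open Scope ring_scope.

Lemma sublevel_closed_aux (R : realType) (k : nat) (M : topologicalType)
    (phi : M -> 'rV[R]_k) (t : 'rV[R]_k) :
  continuous phi -> closed (sublevel phi t).
Proof.
move=> cphi.
have -> : sublevel phi t =
  \bigcap_(i in [set: 'I_k]) ((fun x => phi x ord0 i) @^-1` [set r | r <= t ord0 i]).
  by apply/seteqP; split => [x Hx i _ | x Hx i] /=; [exact: Hx | exact: Hx].
apply: closed_bigI => i _.
have : continuous (fun x => phi x ord0 i).
  move=> x.
  exact: (@continuous_comp _ _ _ phi (fun m : 'rV[R]_k => m ord0 i) x (cphi x) (@coord_continuous R 1 k ord0 i (phi x))).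
move=> cc; apply: (proj1 (continuous_closedP _) cc). exact: closed_le.
Qed.

Lemma open_disj_closure (T : topologicalType) (O B : set T) :
  open O -> O `&` B = set0 -> O `&` closure B = set0.
Proof.
move=> oO OB; apply/seteqP; split => // x [Ox clx].
have [z [Bz Oz]] := clx O (open_nbhs_nbhs (conj oO Ox)).
by have : (O `&` B) z by []; rewrite OB.
Qed.

Theorem lemma5p1 (R : realType) (k : nat) (M : topologicalType)
    (phi : M -> 'rV[R]_k) (y : 'rV[R]_k) (P Q : M) :
  M ->
  compact [set: M] ->
  locally_connected_space M ->
  hausdorff_space M ->
  continuous phi ->
  (forall eps : R, 0 < eps ->
     sublevel_connected phi (y + const_mx eps) P Q) ->
  sublevel_connected phi y P Q.
Proof.
move=> _ cM _ hM cphi H.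
pose S e := sublevel phi (y + const_mx e).
pose K e := connected_component (S e) P.
have Kc e : connected (K e) by exact: component_connected.
have Kcl e : closed (K e).
  by apply: component_closed; exact: sublevel_closed_aux.
have KS e : K e `<=` S e by exact: connected_component_sub.
have KPQ e : 0 < e -> K e P /\ K e Q.
  move=> e0; have [C [Cc CS CP CQ]] := H e e0.
  have CK : C `<=` K e by apply: connected_component_max.
  by split; apply: CK.
have Smono e1 e2 : e1 <= e2 -> S e1 `<=` S e2.
  move=> le x Sx i; have := Sx i; rewrite !mxE => h.
  by apply: (le_trans h); rewrite lerD2l.
have Kmono e1 e2 : e1 <= e2 -> K e1 `<=` K e2.
  move=> le z [C [CP CS Cc] Cz]; exists C => //; split => //.
  exact: (subset_trans CS (Smono _ _ le)).
pose Ki := \bigcap_(e in [set e : R | 0 < e]) K e.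
have Kisub : Ki `<=` sublevel phi y.
  move=> x Kx i; rewrite leNgt; apply/negP => lt.
  pose e := (phi x ord0 i - y ord0 i) / 2.
  have e0 : 0 < e by rewrite /e divr_gt0 // subr_gt0.
  have := KS e x (Kx e e0) i; rewrite !mxE /e.
  move: lt; set a := phi x ord0 i; set b := y ord0 i => lt h.
  by lra.
exists Ki; split => //; [| by move=> e /KPQ [] | by move=> e /KPQ []].
have Kicl : closed Ki by apply: closed_bigI => e _; exact: Kcl.
apply/connectedP => E [E0 EU [sep1 sep2]].
have Ecl b : closed (E b).
  rewrite closure_id; apply/seteqP; split; first exact: subset_closure.
  move=> z clz.
  have : closure Ki z by apply: (closureS _ clz); rewrite EU; case: b {clz}; [right|left].
  rewrite -(proj1 (closure_id _) Kicl) EU => -[|] //.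
  + case: b clz => // clz E0z; exfalso.
    by have : (E false `&` closure (E true)) z by []; rewrite sep2.
  + case: b clz => // clz E1z; exfalso.
    by have : (closure (E false) `&` E true) z by []; rewrite sep1.
have E01 : E false `&` E true = set0.
  apply/seteqP; split => // z [z0 z1].
  have : (closure (E false) `&` E true) z by split => //; exact: subset_closure.
  by rewrite sep1.
have nM := compact_normal hM cM.
have snb : set_nbhs (E false) (~` E true).
  apply/set_nbhsP; exists (~` E true); split => //; first exact: closed_openC.
  move=> z z0 z1; by have : (E false `&` E true) z by []; rewrite E01.
have [N /set_nbhsP [U [oU E0U UN]] clN] := nM _ (Ecl false) _ snb.
pose V := ~` closure N.
have oV : open V by exact/closed_openC/closed_closure.
have E1V : E true `<=` V by move=> z z1 /clN.
have UV : U `&` V = set0.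
  apply/seteqP; split => // z [Uz Vz]; apply: Vz; apply: subset_closure; exact: UN.
pose W := U `|` V.
have sepUV : separated U V.
  split; last exact: open_disj_closure.
  by rewrite setIC; apply: open_disj_closure => //; rewrite setIC.
have KiW : Ki `<=` W by rewrite EU => z [z0|z1]; [left; exact: E0U | right; exact: E1V].
have KW e : 0 < e -> K e `\` W !=set0.
  move=> e0; apply/set0P/negP => /eqP KW0.
  have KeW : K e `<=` U `|` V.
    by move=> z Kz; apply: contrapT => Wz; have : (K e `\` W) z by []; rewrite KW0.
  have [a Ea] := E0 false; have [b Eb] := E0 true.
  have Kia : Ki a by rewrite EU; left.
  have Kib : Ki b by rewrite EU; right.
  case: (connected_subset sepUV KeW (Kc e)) => sub.
  - have : (U `&` V) b by split; [exact: sub (Kib e e0) | exact: E1V].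
    by rewrite UV.
  - have : (U `&` V) a by split; [exact: E0U | exact: sub (Kia e e0)].
    by rewrite UV.
pose F := filter_from [set e : R | 0 < e] (fun e => K e `\` W).
have FF : ProperFilter F.
  apply: filter_from_proper; last exact: KW.
  apply: filter_from_filter; first by exists 1; rewrite /= ltr01.
  move=> i j i0 j0; case/orP: (le_total i j) => ij.
  - exists i => // z [Kz Wz]; split; (split; [exact: Kz || exact: (Kmono _ _ ij _ Kz) | exact: Wz]).
  - exists j => // z [Kz Wz]; split; (split; [exact: Kz || exact: (Kmono _ _ ij _ Kz) | exact: Wz]).
have [x [_ clx]] := cM F FF filterT.
have Kix : forall e, 0 < e -> (K e `\` W) x.
  move=> e e0; rewrite clusterE in clx.
  have Fe : F (K e `\` W) by exists e.
  have := clx _ Fe.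
  have clKW : closed (K e `\` W).
    by rewrite setDE; apply: closedI => //; apply: open_closedC; exact: openU.
  by rewrite -(proj1 (closure_id _) clKW).
have [_ Wx] := Kix 1 ltr01.
by apply: Wx; apply: KiW => e e0; have [] := Kix e e0.
Qed.
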